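(* Let $(v,b)$ satisfy (C1) or (C2). Then every NWBTS$(v;b)$ $(V,\mathcal F)$ is an optimal data placement, i.e. $P(\mathcal F,x)\le P(\mathcal F',x)$ for every TS$(v;b)$ $(V,\mathcal F')$ and every real $x\ge 1$.
   Context: A triple system TS$(v;b)$ is a pair $(V,\mathcal F)$ where $V$ is a set of $v\ge3$ points and $\mathcal F=(B_1,\dots,B_b)$ is a multiset of $b$ 3-subsets of $V$ (blocks); repeated blocks are allowed. $P(\mathcal F,x)=\sum_{j=0}^3 v_jx^j$, where $v_j$ is the number of ordered pairs $(i,i')$, $i\ne i'$, with $|B_i\cap B_{i'}|=j$. For distinct $x_1,\dots,x_j\in V$, $\lambda_{x_1,\dots,x_j}$ is the number of blocks (with multiplicity) containing $\{x_1,\dots,x_j\}$. $(V,\mathcal F)$ is $j$-balanced if $|\lambda_{x_1,\dots,x_j}-\lambda_{y_1,\dots,y_j}|\le 1$ for any two $j$-subsets. The associated pair $(\lambda,\varepsilon)$ of $(v,b)$: integers with $3b=\lambda\binom v2+\varepsilon$, $-v/2<\varepsilon<v/2$. (C1): $v\equiv 2\pmod 3$ and $b\in\{\lfloor \lambda v(v-1)/6\rfloor,\lceil \lambda v(v-1)/6\rceil\}$ for an integer $\lambda$ with $\lambda\equiv1,2\pmod 3$ if $v\equiv5\pmod6$ and $\lambda\equiv 2,4\pmod 6$ if $v\equiv2\pmod 6$. (C2): $v$ even and $\lambda v(v-1)/6-v/6<b<\lambda v(v-1)/6+v/6$ for an odd integer $\lambda$. In both cases $\lambda$ is the $\lambda$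 of the associated pair. Defect graph: if all $\lambda_{x,y}\in\{\lambda-1,\lambda,\lambda+1\}$, the defect graph is the graph on $V$ with edges $D_1=\{\{x,y\}:\lambda_{x,y}=\lambda+1\}$ (labelled $+1$) and $D_{-1}=\{\{x,y\}:\lambda_{x,y}=\lambda-1\}$ (labelled $-1$); isomorphisms preserve labels. $G_1$: triangle, two $+1$ edges, one $-1$ edge; $G_{-1}$: triangle, one $+1$, two $-1$; $G_2$: 4-cycle, three $+1$, one $-1$; $G_{-2}$: 4-cycle, one $+1$, three $-1$. For even $v$: $H^0_{v,\varepsilon}$: perfect matching with $(v+2\varepsilon)/4$ edges $+1$ and $(v-2\varepsilon)/4$ edges $-1$; $H^1_{v,\varepsilon}$: disjoint union of a $K_{1,3}$ with two $+1$ and one $-1$ edge and a matching of the other $v-4$ vertices with $(v-6+2\varepsilon)/4$ edges $+1$, $(v-2-2\varepsilon)/4$ edges $-1$; $H^2_{v,\varepsilon}$: disjoint union of a $K_{1,3}$ with one $+1$ and two $-1$ edges and a matching of the other $v-4$ vertices with $(v-2+2\varepsilon)/4$ edges $+1$, $(v-6-2\varepsilon)/4$ edges $-1$. Nearly 2-balanced: all $\lambda_{x,y}\in\{\lambda-1,\lambda,\lambda+1\}$ and the defect graph is isomorphic to $G_\varepsilon$ under (C1); under (C2) to $H^0_{v,\varepsilon}$ if $\varepsilon\equiv v/2 \pmod 2$, and to $H^1_{v,\varepsilon}$ or $H^2_{v,\varepsilon}$ otherwise. An NWBTS$(v;b)$ is a nearly 2-balanced, 3-balanced TS$(v;b)$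 with $(v,b)$ satisfying (C1) or (C2). *)

(* Defs.v *)
From HB Require Import structures.
From mathcomp Require Import all_boot all_order all_algebra.
From mathcomp Require Import reals.
Set Implicit Arguments. Unset Strict Implicit. Unset Printing Implicit Defensive.
Import Order.TTheory GRing.Theory Num.Theory.

Section TS.
Variables (V : finType) (b : nat).

(* A triple system TS(v;b) on the point set V (v = #|V|): a family of b blocks
   (indexed by 'I_b, so repeated blocks are allowed), each a 3-subset of V. *)
Definition is_TS (F : 'I_b -> {set V}) : Prop :=
  3 <= #|V| /\ forall i, #|F i| = 3.

Definition lamS (F : 'I_b -> {set V}) (S : {set V}) : nat :=
  #|[set i | S \subset F i]|.

Definition vj (F : 'I_b -> {set V}) (j : nat) : nat :=
  #|[set p : 'I_b * 'I_b | (p.1 != p.2) && (#|F p.1 :&: F p.2| == j)]|.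

Definition Ppoly (R : realType) (F : 'I_b -> {set V}) (x : R) : R :=
  \sum_(j < 4) (vj F j)%:R * x ^+ j.

Definition balanced3 (F : 'I_b -> {set V}) : Prop :=
  forall S S' : {set V}, #|S| = 3 -> #|S'| = 3 -> lamS F S <= (lamS F S').+1.

(* label of the pair {x,y} in the defect graph: lambda_{x,y} - lambda *)
Definition defect (F : 'I_b -> {set V}) (lam : nat) (x y : V) : int :=
  (lamS F [set x; y])%:Z - lam%:Z.

(* A labelled graph given by its list of labelled edges on vertices 0..v-1;
   label_of E i j = label of {i,j}, or 0 if {i,j} is not an edge. *)
Definition label_of (E : seq (nat * nat * int)) (i j : nat) : int :=
  \sum_(e <- E | ((e.1.1 == i) && (e.1.2 == j)) || ((e.1.1 == j) && (e.1.2 == i)))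
     e.2.

(* The defect graph (on V) is isomorphic, as a labelled graph, to the graph
   with edge list E on the vertex set {0,...,v-1} (isolated vertices padded). *)
Definition defect_iso (F : 'I_b -> {set V}) (lam : nat)
  (E : seq (nat * nat * int)) : Prop :=
  exists f : 'I_#|V| -> V, bijective f /\
    forall i j : 'I_#|V|, i != j -> defect F lam (f i) (f j) = label_of E i j.

End TS.

Definition C1 (v b lam : nat) : Prop :=
  v %% 3 = 2 /\
  (b = (lam * v * (v - 1)) %/ 6 \/ b = (lam * v * (v - 1) + 5) %/ 6) /\
  (v %% 6 = 5 -> lam %% 3 = 1 \/ lam %% 3 = 2) /\
  (v %% 6 = 2 -> lam %% 6 = 2 \/ lam %% 6 = 4).

Definition C2 (v b lam : nat) : Prop :=
  ~~ odd v /\ odd lam /\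
  lam * v * (v - 1) < 6 * b + v /\ 6 * b < lam * v * (v - 1) + v.

Definition assoc_pair (v b lam : nat) (eps : int) : Prop :=
  Posz (3 * b) = (Posz (lam * 'C(v, 2)) + eps)%R /\
  (- Posz v < 2 * eps)%R /\ (2 * eps < Posz v)%R.

Local Open Scope ring_scope.

Definition ed (i j : nat) (l : int) : nat * nat * int := (i, j, l).

Definition G_edges (eps : int) : option (seq (nat * nat * int)) :=
  if eps == 1 then Some [:: ed 0 1 (1); ed 1 2 (1); ed 0 2 (-1)]
  else if eps == -1 then Some [:: ed 0 1 (1); ed 1 2 (-1); ed 0 2 (-1)]
  else if eps == 2 then Some [:: ed 0 1 (1); ed 1 2 (1); ed 2 3 (1); ed 3 0 (-1)]
  else if eps == -2 then Some [:: ed 0 1 (1); ed 1 2 (-1); ed 2 3 (-1); ed 3 0 (-1)]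
  else None.

(* H^0_{v,eps}: perfect matching {2i,2i+1}; the first (v+2eps)/4 edges +1,
   the remaining (v-2eps)/4 edges -1. *)
Definition H0_edges (v : nat) (eps : int) : seq (nat * nat * int) :=
  [seq ((2 * i)%N, (2 * i + 1)%N,
        if 4 * (i%:Z) < v%:Z + 2 * eps then 1 else -1) | i <- iota 0 v./2].

(* H^1_{v,eps}: K_{1,3} centre 0 with labels +1,+1,-1, plus a matching
   {4+2i,5+2i} with (v-6+2eps)/4 edges +1 and the others -1. *)
Definition H1_edges (v : nat) (eps : int) : seq (nat * nat * int) :=
  [:: ed 0 1 (1); ed 0 2 (1); ed 0 3 (-1)] ++
  [seq ((4 + 2 * i)%N, (5 + 2 * i)%N,
        if 4 * (i%:Z) < v%:Z - 6 + 2 * eps then 1 else -1) | i <- iota 0 (v - 4)./2].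

(* H^2_{v,eps}: K_{1,3} with labels +1,-1,-1, plus a matching with
   (v-2+2eps)/4 edges +1 and the others -1. *)
Definition H2_edges (v : nat) (eps : int) : seq (nat * nat * int) :=
  [:: ed 0 1 (1); ed 0 2 (-1); ed 0 3 (-1)] ++
  [seq ((4 + 2 * i)%N, (5 + 2 * i)%N,
        if 4 * (i%:Z) < v%:Z - 2 + 2 * eps then 1 else -1) | i <- iota 0 (v - 4)./2].

Definition defect_in_range (V : finType) (b : nat) (F : 'I_b -> {set V})
  (lam : nat) : Prop :=
  forall x y : V, x != y ->
    [|| defect F lam x y == -1, defect F lam x y == 0 | defect F lam x y == 1].

Definition nearly2_C1 (V : finType) (b : nat) (F : 'I_b -> {set V})
  (lam : nat) (eps : int) : Prop :=
  defect_in_range F lam /\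
  exists E, G_edges eps = Some E /\ defect_iso F lam E.

Definition nearly2_C2 (V : finType) (b : nat) (F : 'I_b -> {set V})
  (lam : nat) (eps : int) : Prop :=
  let v := #|V| in
  defect_in_range F lam /\
  (if ~~ odd `|eps - (v./2)%:Z|%N (* eps = v/2 mod 2 *)
   then defect_iso F lam (H0_edges v eps)
   else ((0 <= v%:Z - 6 + 2 * eps) && (0 <= v%:Z - 2 - 2 * eps)
         /\ defect_iso F lam (H1_edges v eps))
     \/ ((0 <= v%:Z - 2 + 2 * eps) && (0 <= v%:Z - 6 - 2 * eps)
         /\ defect_iso F lam (H2_edges v eps))).

Definition NWBTS (V : finType) (b : nat) (F : 'I_b -> {set V}) : Prop :=
  is_TS F /\ balanced3 F /\
  exists (lam : nat) (eps : int), assoc_pair #|V| b lam eps /\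
    ((C1 #|V| b lam /\ nearly2_C1 F lam eps) \/
     (C2 #|V| b lam /\ nearly2_C2 F lam eps)).

(* Main.v *)
Require Import Defs.
From HB Require Import structures.
From mathcomp Require Import all_boot all_order all_algebra.
From mathcomp Require Import reals.
From mathcomp Require Import zify ring lra.
Import Order.TTheory GRing.Theory Num.Theory.
Set Implicit Arguments. Unset Strict Implicit. Unset Printing Implicit Defensive.
Lemma bal_sq (T : finType) (P : pred T) (a a' : T -> nat) :
  \sum_(t | P t) a t = \sum_(t | P t) a' t ->
  (forall s t, P s -> P t -> a s <= (a t).+1) ->
  \sum_(t | P t) a t * a t <= \sum_(t | P t) a' t * a' t.
Proof.
move=> Hs Hb.
case: (pickP P) => [t0 Pt0|P0]; last by rewrite big_pred0.
case: (arg_minnP a Pt0) => t1 Pt1 Hmin.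
set m := a t1.
have h1 : \sum_(t | P t) ((2 * m + 1) * a' t) <= \sum_(t | P t) (a' t * a' t + m * (m + 1)).
  apply: leq_sum => t _; case: (leqP (a' t) m) => h.
    have : 0 <= (m - a' t) * (m + 1 - a' t) by []. nia.
  have : 0 <= (a' t - m) * (a' t - m - 1) by []. nia.
have h2 : \sum_(t | P t) ((2 * m + 1) * a t) = \sum_(t | P t) (a t * a t + m * (m + 1)).
  apply: eq_bigr => t Pt; have := Hmin t Pt; have := Hb t t1 Pt Pt1; rewrite -/m; nia.
rewrite big_split /= -big_distrr /= in h1.
rewrite big_split /= -big_distrr /= in h2.
rewrite -Hs in h1; lia.
Qed.
Lemma lamE (V : finType) (b : nat) (F : 'I_b -> {set V}) (S : {set V}) :
  lamS F S = \sum_(i < b | S \subset F i) 1.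
Proof. by rewrite /lamS sum1dep_card. Qed.

Lemma sumlam (V : finType) (b : nat) (F : 'I_b -> {set V}) k : is_TS F ->
  \sum_(S : {set V} | #|S| == k) lamS F S = b * 'C(3, k).
Proof.
move=> [_ H3].
under eq_bigr do rewrite lamE.
rewrite (exchange_big_dep xpredT) //=.
transitivity (\sum_(i < b) 'C(3, k)); last by rewrite sum_nat_const card_ord.
apply: eq_bigr => i _; rewrite sum1dep_card -(H3 i) -cards_draws.
by apply: eq_card => S; rewrite !inE andbC.
Qed.

Lemma lam0 (V : finType) (b : nat) (F : 'I_b -> {set V}) : lamS F set0 = b.
Proof. by rewrite /lamS -[RHS]card_ord; apply: eq_card => i; rewrite inE sub0set. Qed.

Lemma lam_big (V : finType) (b : nat) (F : 'I_b -> {set V}) (S : {set V}) :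
  is_TS F -> 3 < #|S| -> lamS F S = 0.
Proof.
move=> [_ H3] h; apply/eqP; rewrite cards_eq0; apply/eqP/setP => i; rewrite !inE.
apply/negP => /subset_leq_card; rewrite H3; lia.
Qed.

Lemma vertex (V : finType) (b : nat) (F : 'I_b -> {set V}) (x : V) : is_TS F ->
  \sum_(y | y != x) lamS F [set x; y] = 2 * lamS F [set x].
Proof.
move=> [_ H3].
under eq_bigr do rewrite lamE.
rewrite (exchange_big_dep xpredT) //= lamE big_distrr /= big_mkcond [RHS]big_mkcond /=.
apply: eq_bigr => i _; rewrite sum1dep_card sub1set.
case: ifP => xF.
  have -> : [set y | y != x & [set x; y] \subset F i] = F i :\ x.
    by apply/setP => y; rewrite !inE subUset !sub1set xF.
  by have := cardsD1 x (F i); rewrite H3 xF; lia.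
apply/eqP; rewrite cards_eq0; apply/eqP/setP => y.
by rewrite !inE subUset !sub1set xF andbF.
Qed.

Lemma pair_mem (V : finType) (a b x y : V) : a != b ->
  (y != x) && ([set x; y] == [set a; b]) = ((x, y) == (a, b)) || ((x, y) == (b, a)).
Proof.
move=> ab; apply/idP/idP.
- case/andP=> yx /eqP E.
  have xin : x \in [set a; b] by rewrite -E !inE eqxx.
  have yin : y \in [set a; b] by rewrite -E !inE eqxx orbT.
  move: xin yin yx; rewrite !inE => /orP[]/eqP-> /orP[]/eqP->; rewrite ?eqxx ?orbT //=.
- case/orP => /eqP [-> ->]; first by rewrite eq_sym ab eqxx.
  by rewrite ab setUC eqxx.
Qed.

Lemma conv (V : finType) (g : {set V} -> nat) :
  \sum_(x : V) \sum_(y | y != x) g [set x; y] = 2 * \sum_(S : {set V} | #|S| == 2) g S.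
Proof.
rewrite pair_big_dep /=.
rewrite (partition_big (fun p : V * V => [set p.1; p.2]) (fun S => #|S| == 2)) /=; last first.
  by move=> [x y] /= yx; rewrite cards2 (eq_sym x) yx.
rewrite big_distrr /=; apply: eq_bigr => S /cards2P [a [c [ac ->]]].
transitivity (\sum_(p : V * V | (p.2 != p.1) && ([set p.1; p.2] == [set a; c])) g [set a; c]).
  by apply: eq_bigr => p /andP[_ /eqP ->].
rewrite sum_nat_const; congr (_ * _).
transitivity #|[set (a, c); (c, a)]|.
  apply: eq_card => -[x y]; rewrite !inE /=; exact: pair_mem.
suff ne : (a, c) != (c, a) by rewrite cards2 ne.
by apply/eqP => -[h _]; rewrite h eqxx in ac.
Qed.
Definition Qk (V : finType) (b : nat) (F : 'I_b -> {set V}) (k : nat) : nat :=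
  \sum_(S : {set V} | #|S| == k) (lamS F S * lamS F S)%N.

Lemma K0 (V : finType) (b : nat) (F : 'I_b -> {set V}) : Qk F 0 = b * b.
Proof.
rewrite /Qk (big_pred1 set0) ?lam0 // => S; by rewrite cards_eq0.
Qed.

Lemma K4 (V : finType) (b : nat) (F : 'I_b -> {set V}) k : is_TS F -> 3 < k -> Qk F k = 0.
Proof.
move=> TS k3; rewrite /Qk big1 // => S /eqP Sk; rewrite lam_big //; lia.
Qed.

Lemma K3 (V : finType) (b : nat) (F F' : 'I_b -> {set V}) :
  is_TS F -> is_TS F' -> balanced3 F -> Qk F 3 <= Qk F' 3.
Proof.
move=> TS TS' B3; apply: bal_sq; first by rewrite !sumlam.
by move=> S T /eqP hS /eqP hT; apply: B3.
Qed.

Lemma K1 (V : finType) (b : nat) (F F' : 'I_b -> {set V}) :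
  is_TS F -> is_TS F' -> (forall x y : V, lamS F [set x] <= (lamS F [set y]).+1) ->
  Qk F 1 <= Qk F' 1.
Proof.
move=> TS TS' B1; apply: bal_sq; first by rewrite !sumlam.
by move=> S T /cards1P[x ->] /cards1P[y ->]; apply: B1.
Qed.
Lemma term_le (I : finType) (P : pred I) (f : I -> nat) i :
  P i -> f i <= \sum_(j | P j) f j.
Proof. by move=> Pi; rewrite (bigD1 i) //= leq_addr. Qed.

Lemma exists_pos (I : finType) (P : pred I) (f : I -> nat) :
  0 < \sum_(j | P j) f j -> exists j, P j && (0 < f j).
Proof.
move=> h; case: (pickP [pred j | P j && (0 < f j)]) => [j /= hj|none]; first by exists j.
move: h; rewrite big1 // => j Pj; move: (none j) => /=; rewrite Pj /=.
by case: (f j).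
Qed.

Lemma odd_sum (I : finType) (P : pred I) (f : I -> nat) :
  odd (\sum_(j | P j) f j) = odd (\sum_(j | P j) (odd (f j) : nat)).
Proof.
elim/big_rec2: _ => //= j m n _ IH; by rewrite !oddD IH oddb.
Qed.

Definition dn (a c : nat) : nat := (a - c) + (c - a).

Section Fp.
End Fp.

Definition oddc (V : finType) (b : nat) (F : 'I_b -> {set V}) (lam : nat) (S : {set V}) : nat :=
  odd (lamS F S + lam).

Definition deg (V : finType) (b : nat) (F : 'I_b -> {set V}) (lam : nat) (x : V) : nat :=
  \sum_(y | y != x) oddc F lam [set x; y].

Definition ocnt (V : finType) (b : nat) (F : 'I_b -> {set V}) (lam : nat) : nat :=
  \sum_(S : {set V} | #|S| == 2) oddc F lam S.

Definition dsq (V : finType) (b : nat) (F : 'I_b -> {set V}) (lam : nat) : nat :=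
  \sum_(S : {set V} | #|S| == 2) dn (lamS F S) lam * dn (lamS F S) lam.

Lemma o_le_dsq (V : finType) (b : nat) (F : 'I_b -> {set V}) lam :
  ocnt F lam <= dsq F lam.
Proof.
apply: leq_sum => S _; rewrite /oddc /dn.
case: (boolP (odd (lamS F S + lam))) => h //=.
have : lamS F S != lam by apply: contraTneq h => ->; rewrite addnn odd_double.
move=> /eqP ne; nia.
Qed.

Lemma ocnt_deg (V : finType) (b : nat) (F : 'I_b -> {set V}) lam :
  2 * ocnt F lam = \sum_x deg F lam x.
Proof. by rewrite /ocnt /deg conv. Qed.

Lemma N2 (V : finType) : #|[pred S : {set V} | #|S| == 2]| = 'C(#|V|, 2).
Proof. by rewrite -card_draws; apply: eq_card => S; rewrite inE. Qed.

Lemma ocnt_odd (V : finType) (b : nat) (F : 'I_b -> {set V}) lam : is_TS F ->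
  odd (ocnt F lam) = odd (3 * b + 'C(#|V|, 2) * lam).
Proof.
move=> TS; rewrite /ocnt /oddc -odd_sum big_split /= sumlam //.
rewrite -N2 -sum_nat_const mulnC; congr (odd (_ + _)).
Qed.

Lemma deg_odd (V : finType) (b : nat) (F : 'I_b -> {set V}) lam x : is_TS F ->
  odd (deg F lam x) = odd (lam * (#|V| - 1)).
Proof.
move=> TS; rewrite /deg /oddc -odd_sum big_split /= vertex //.
rewrite oddD oddM /=.
have -> : \sum_(y | y != x) lam = \sum_(y in predC1 x) lam by [].
by rewrite sum_nat_const cardC1 subn1 mulnC.
Qed.

Lemma oddc_le1 (V : finType) (b : nat) (F : 'I_b -> {set V}) lam S : oddc F lam S <= 1.
Proof. by rewrite /oddc; case: odd. Qed.

Lemma deg_split (V : finType) (b : nat) (F : 'I_b -> {set V}) lam (x y : V) :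
  y != x -> ~~ odd (deg F lam x) -> 0 < oddc F lam [set x; y] ->
  exists z, [&& z != x, z != y & 0 < oddc F lam [set x; z]].
Proof.
move=> yx ev pos.
move: ev; rewrite /deg (bigD1 y) //=.
have -> : oddc F lam [set x; y] = 1 by move: pos (oddc_le1 F lam [set x; y]); lia.
move=> ev.
have : 0 < \sum_(i | (i != x) && (i != y)) oddc F lam [set x; i].
  by move: ev; case: (\sum_(i | _) _) => //.
by case/exists_pos => z /andP[/andP[zx zy] pz]; exists z; rewrite zx zy pz.
Qed.

Lemma path3 (V : finType) (b : nat) (F : 'I_b -> {set V}) lam :
  (forall x, ~~ odd (deg F lam x)) -> 0 < ocnt F lam -> 3 <= ocnt F lam.
Proof.
move=> ev h.
have [S /andP[S2 oS]] := exists_pos h.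
case/cards2P: S2 oS => x [y [xy ->]] oxy.
have yx : y != x by rewrite eq_sym.
have [z /and3P[zx zy oxz]] := deg_split yx (ev x) oxy.
have xz : x != z by rewrite eq_sym.
have ozx : 0 < oddc F lam [set z; x] by rewrite setUC.
have [w /and3P[wz wx ozw]] := deg_split xz (ev z) ozx.
have n12 : [set x; z] != [set x; y].
  by apply/eqP => /setP /(_ z); rewrite !inE eqxx orbT (negbTE zx) (negbTE zy).
have n13 : [set z; w] != [set x; y].
  by apply/eqP => /setP /(_ z); rewrite !inE eqxx (negbTE zx) (negbTE zy).
have n23 : [set z; w] != [set x; z].
  apply/eqP => /setP /(_ x); rewrite !inE eqxx.
  by rewrite (negbTE xz) (eq_sym x w) (negbTE wx).
rewrite /ocnt.
rewrite (bigD1 [set x; y]) /=; last by rewrite cards2 xy.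
rewrite (bigD1 [set x; z]) /=; last by rewrite cards2 xz n12.
rewrite (bigD1 [set z; w]) /=; last by rewrite cards2 (eq_sym z w) wz n13 n23.
lia.
Qed.

Lemma cover_bound (V : finType) (b : nat) (F : 'I_b -> {set V}) lam :
  (forall x, odd (deg F lam x)) -> #|V| <= 2 * ocnt F lam.
Proof.
move=> od; rewrite ocnt_deg -sum1_card; apply: leq_sum => x _.
by move: (od x); case: (deg F lam x).
Qed.

Lemma even_bound (V : finType) (b : nat) (F : 'I_b -> {set V}) lam : is_TS F ->
  ocnt F lam = 0 -> 3 * b != 'C(#|V|, 2) * lam -> 4 <= dsq F lam.
Proof.
move=> TS o0 ne.
case: (pickP [pred S : {set V} | (#|S| == 2) && (lamS F S != lam)]) => [S /= /andP[S2 Sne]|none].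
  have : oddc F lam S <= 0 by rewrite -o0; exact: term_le.
  rewrite /oddc; case: (boolP (odd (lamS F S + lam))) => //= ho _.
  have h2 : 2 <= dn (lamS F S) lam.
    have hm : (lamS F S + lam) %% 2 = 0 by rewrite modn2 (negbTE ho).
    move: Sne; rewrite /dn => /eqP Sne; lia.
  apply: leq_trans (term_le _ S2); nia.
exfalso; move/eqP: ne; apply.
have := sumlam 2 TS; rewrite mulnC /= => <-.
rewrite -N2 -sum_nat_const; apply: eq_bigr => S S2.
by move: (none S) => /=; rewrite S2 /= => /negbFE /eqP.
Qed.

Lemma K2red (V : finType) (b : nat) (F F' : 'I_b -> {set V}) lam :
  is_TS F -> is_TS F' -> dsq F lam <= dsq F' lam -> Qk F 2 <= Qk F' 2.
Proof.
move=> TS TS' hd.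
have e : forall G : 'I_b -> {set V}, is_TS G ->
   Qk G 2 + \sum_(S : {set V} | #|S| == 2) lam * lam = dsq G lam + 2 * lam * (3 * b).
  move=> G TG; rewrite /Qk /dsq -big_split /=.
  rewrite -[3 * b](mulnC b) -(sumlam 2 TG) big_distrr -big_split /=.
  apply: eq_bigr => S _; rewrite /dn; nia.
have := e F TS; have := e F' TS'; lia.
Qed.
Definition condE (e : nat * nat * int) (i j : nat) : bool :=
  ((e.1.1 == i) && (e.1.2 == j)) || ((e.1.1 == j) && (e.1.2 == i)).

Lemma sum_single (v n : nat) (i : 'I_v) : n < v -> n != i ->
  \sum_(j : 'I_v | j != i) ((n == j) : nat) = 1.
Proof.
move=> nv ni.
rewrite (bigD1 (Ordinal nv)) /=; last by [].
rewrite eqxx big1 // => j /andP[_ jn].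
case: eqP => // h; case/negP: jn; apply/eqP/val_inj; by rewrite /= h.
Qed.

Lemma cnt (v : nat) (e : nat * nat * int) (i : 'I_v) :
  e.1.1 < v -> e.1.2 < v -> e.1.1 != e.1.2 ->
  \sum_(j : 'I_v | j != i) (condE e i j : nat) = (e.1.1 == i) + (e.1.2 == i).
Proof.
move=> h1 h2 h12; rewrite /condE.
case: (eqVneq e.1.1 i) => [e1|n1].
  have n2 : e.1.2 != i by rewrite -e1 eq_sym.
  rewrite (negbTE n2) /= -(sum_single h2 n2) addn0.
  by apply: eq_bigr => j _; rewrite andbF orbF.
case: (eqVneq e.1.2 i) => [e2|n2].
  rewrite /= -(sum_single h1 n1).
  by apply: eq_bigr => j _; rewrite andbT.
by rewrite big1 // => j _; rewrite !andbF.
Qed.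

Definition wf0 (v : nat) (e : nat * nat * int) : bool :=
  (e.1.1 < v) && (e.1.2 < v) && (e.1.1 != e.1.2).
Definition lab1 (e : nat * nat * int) : bool := (e.2 == 1%R) || (e.2 == (-1)%R).
Definition keyE (e : nat * nat * int) : nat * nat := (minn e.1.1 e.1.2, maxn e.1.1 e.1.2).

Local Open Scope ring_scope.

Lemma degsum (v : nat) (E : seq (nat * nat * int)) (i : 'I_v) :
  all (wf0 v) E ->
  \sum_(j : 'I_v | j != i) label_of E i j =
  \sum_(e <- E) e.2 * ((e.1.1 == i) + (e.1.2 == i))%N%:R.
Proof.
move=> /allP wfE; rewrite /label_of.
under eq_bigr do rewrite big_mkcond /=.
rewrite exchange_big /=; apply: eq_big_seq => e eE.
have /andP[/andP[h1 h2] h12] := wfE e eE.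
rewrite -(cnt i h1 h2 h12) natr_sum mulr_sumr; apply: eq_bigr => j _.
rewrite /condE; case: ifP => _; by rewrite ?mulr1 ?mulr0.
Qed.

Lemma sum_one (v n : nat) : (n < v)%N -> \sum_(i : 'I_v) ((n == i) : nat) = 1%N.
Proof.
move=> nv; rewrite (bigD1 (Ordinal nv)) //= eqxx big1 // => j jn.
case: eqP => // h; case/negP: jn; apply/eqP/val_inj; by rewrite /= h.
Qed.

Lemma sum_bool_seq (T : Type) (s : seq T) (c : pred T) :
  (\sum_(e <- s) (c e : nat) = size (filter c s))%N.
Proof.
rewrite size_filter -sum1_count [RHS]big_mkcond /=.
by apply: eq_bigr => e _; case: (c e).
Qed.

Lemma lab_cnt (E : seq (nat * nat * int)) (i j : nat) :
  uniq (map keyE E) -> all lab1 E ->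
  ((label_of E i j != 0) : nat) = \sum_(e <- E) (condE e i j : nat).
Proof.
move=> uE /allP lE.
rewrite /label_of -big_filter sum_bool_seq.
have key : forall e, condE e i j -> keyE e = (minn i j, maxn i j).
  move=> e; rewrite /condE /keyE => /orP[/andP[/eqP -> /eqP ->]|/andP[/eqP -> /eqP ->]] //.
  by rewrite minnC maxnC.
have sub : forall e, e \in [seq e <- E | condE e i j] -> (e \in E) && condE e i j.
  by move=> e; rewrite mem_filter andbC.
have uF : uniq (map keyE [seq e <- E | condE e i j]).
  by apply: subseq_uniq uE; apply: map_subseq; apply: filter_subseq.
move: sub uF; case: [seq e <- E | condE e i j] => [|a [|c t]] sub uF.
- by rewrite big_nil.
- rewrite big_cons big_nil addr0.
  have /andP[aE _] := sub a (mem_head _ _).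
  by have /orP[/eqP ->|/eqP ->] := lE a aE.
- have /andP[_ ca] := sub a (mem_head _ _).
  have /andP[_ cc] : (c \in E) && condE c i j by apply: sub; rewrite !inE eqxx orbT.
  by move: uF; rewrite /= (key a ca) (key c cc) inE eqxx.
Qed.

Lemma edge_count (v : nat) (E : seq (nat * nat * int)) :
  all (wf0 v) E -> uniq (map keyE E) -> all lab1 E ->
  (\sum_(i : 'I_v) \sum_(j : 'I_v | j != i) ((label_of E i j != 0) : nat) = 2 * size E)%N.
Proof.
move=> /allP wfE uE lE.
under eq_bigr => i _ do under eq_bigr => j _ do rewrite (lab_cnt i j uE lE).
under eq_bigr do rewrite exchange_big /=.
rewrite exchange_big /=.
transitivity (\sum_(e <- E) 2)%N; last first.
  by rewrite big_const_seq count_predT iter_addn_0 mulnC.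
apply: eq_big_seq => e eE.
have /andP[/andP[h1 h2] h12] := wfE e eE.
under eq_bigr do rewrite (cnt _ h1 h2 h12).
by rewrite big_split /= !sum_one.
Qed.

Definition Dsum (E : seq (nat * nat * int)) (i : nat) : int :=
  \sum_(e <- E) e.2 * ((e.1.1 == i) + (e.1.2 == i))%N%:R.

Lemma sum_iota_ind (g : nat -> int) (n m : nat) :
  \sum_(k <- iota 0 n) g k * (k == m)%:R = if (m < n)%N then g m else 0.
Proof.
elim: n => [|n IH]; first by rewrite big_nil.
rewrite -addn1 iotaD big_cat /= big_seq1 IH add0n addn1.
case: (ltngtP m n) => h.
- by rewrite /= mulr0 addr0 (ltn_trans h (ltnSn _)).
- by rewrite /= ltnS leqNgt h mulr0 addr0.
- by rewrite /= h mulr1 add0r ltnSn.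
Qed.

Definition Mt (o n : nat) (l : nat -> int) : seq (nat * nat * int) :=
  [seq ((o + 2 * k)%N, (o + 2 * k + 1)%N, l k) | k <- iota 0 n].

Lemma Mt_wf (v o n : nat) l : (o + 2 * n <= v)%N -> all (wf0 v) (Mt o n l).
Proof.
move=> h; apply/allP => e /mapP[k]; rewrite mem_iota add0n => /andP[_ kn] -> /=.
rewrite /wf0 /=; apply/andP; split; first (apply/andP; split); lia.
Qed.

Lemma Mt_lab (o n : nat) l : (forall k, (l k == 1) || (l k == -1)) -> all lab1 (Mt o n l).
Proof. by move=> h; apply/allP => e /mapP[k _ ->]; exact: h. Qed.

Lemma Mt_key (o n : nat) l :
  map keyE (Mt o n l) = [seq ((o + 2 * k)%N, (o + 2 * k + 1)%N) | k <- iota 0 n].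
Proof.
rewrite /Mt -map_comp; apply: eq_map => k /=; rewrite /keyE /=.
by rewrite (minn_idPl (leq_addr 1 _)) (maxn_idPr (leq_addr 1 _)).
Qed.

Lemma Mt_uniq (o n : nat) l : uniq (map keyE (Mt o n l)).
Proof.
rewrite Mt_key map_inj_uniq ?iota_uniq // => k1 k2 [h _]; lia.
Qed.

Lemma Mt_size (o n : nat) l : size (Mt o n l) = n.
Proof. by rewrite size_map size_iota. Qed.

Lemma Mt_D (o n : nat) l (i : nat) :
  Dsum (Mt o n l) i = if (o <= i < o + 2 * n)%N then l ((i - o) %/ 2)%N else 0.
Proof.
rewrite /Dsum big_map /=.
case: (leqP o i) => hoi /=.
  have e : forall k, ((o + 2 * k == i) + (o + 2 * k + 1 == i))%N = (k == (i - o) %/ 2)%N.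
    move=> k; case: eqP => h1; case: eqP => h2; case: eqP => h3 //=; lia.
  under eq_bigr => k _ do rewrite e.
  rewrite sum_iota_ind; congr (if _ then _ else _); apply/idP/idP; lia.
rewrite big1_seq // => k _.
have -> : (o + 2 * k == i) = false by apply/negbTE; lia.
have -> : (o + 2 * k + 1 == i) = false by apply/negbTE; lia.
by rewrite mulr0.
Qed.

Lemma Dsum_cat E1 E2 i : Dsum (E1 ++ E2) i = Dsum E1 i + Dsum E2 i.
Proof. by rewrite /Dsum big_cat. Qed.

Definition lH0 (v : nat) (eps : int) (i : nat) : int :=
  if 4 * (i%:Z) < v%:Z + 2 * eps then 1 else -1.
Definition lH1 (v : nat) (eps : int) (i : nat) : int :=
  if 4 * (i%:Z) < v%:Z - 6 + 2 * eps then 1 else -1.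
Definition lH2 (v : nat) (eps : int) (i : nat) : int :=
  if 4 * (i%:Z) < v%:Z - 2 + 2 * eps then 1 else -1.

Lemma H0E v eps : H0_edges v eps = Mt 0 v./2 (lH0 v eps).
Proof. by apply: eq_map => k; rewrite add0n. Qed.

Lemma H1E v eps : H1_edges v eps =
  [:: ed 0 1 (1); ed 0 2 (1); ed 0 3 (-1)] ++ Mt 4 (v - 4)./2 (lH1 v eps).
Proof. by congr (_ ++ _); apply: eq_map => k; rewrite addnAC. Qed.

Lemma H2E v eps : H2_edges v eps =
  [:: ed 0 1 (1); ed 0 2 (-1); ed 0 3 (-1)] ++ Mt 4 (v - 4)./2 (lH2 v eps).
Proof. by congr (_ ++ _); apply: eq_map => k; rewrite addnAC. Qed.

Definition goodE (v : nat) (E : seq (nat * nat * int)) (lo : int) : Prop :=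
  [/\ all (wf0 v) E, uniq (map keyE E), all lab1 E &
     forall i, (i < v)%N -> lo <= Dsum E i <= lo + 2].

Lemma G_good (v : nat) (eps : int) E : (4 <= v)%N -> G_edges eps = Some E ->
  exists lo, goodE v E lo /\
   ((eps = 1 \/ eps = -1) /\ size E = 3%N \/ (eps = 2 \/ eps = -2) /\ size E = 4%N).
Proof.
move=> v4; rewrite /G_edges.
case: eqP => [-> /= [<-]|_].
  exists 0; split; last by left; split; [left|].
  split; [rewrite /= /wf0 /=; apply/and4P; split => //; lia|by []|by []|].
  move=> i _; rewrite /Dsum !big_cons big_nil /=.
  by case: i => [|[|[|[|i]]]].
case: eqP => [-> /= [<-]|_].
  exists (-2); split; last by left; split; [right|].
  split; [rewrite /= /wf0 /=; apply/and4P; split => //; lia|by []|by []|].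
  move=> i _; rewrite /Dsum !big_cons big_nil /=.
  by case: i => [|[|[|[|i]]]].
case: eqP => [-> /= [<-]|_].
  exists 0; split; last by right; split; [left|].
  split; [rewrite /= /wf0 /=; apply/and5P; split => //; lia|by []|by []|].
  move=> i _; rewrite /Dsum !big_cons big_nil /=.
  by case: i => [|[|[|[|i]]]].
case: eqP => [-> /= [<-]|_ //].
exists (-2); split; last by right; split; [right|].
split; [rewrite /= /wf0 /=; apply/and5P; split => //; lia|by []|by []|].
move=> i _; rewrite /Dsum !big_cons big_nil /=.
by case: i => [|[|[|[|i]]]].
Qed.

Lemma even_half (v : nat) : ~~ odd v -> (2 * v./2)%N = v.
Proof. move=> ev; have := odd_double_half v; rewrite (negbTE ev) add0n -mul2n; done. Qed.

Lemma lH_rng (l : int) : (l = 1 \/ l = -1) -> -1 <= l <= 1.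
Proof. by case=> ->. Qed.

Lemma H0_good (v : nat) (eps : int) : ~~ odd v ->
  goodE v (H0_edges v eps) (-1) /\ size (H0_edges v eps) = v./2.
Proof.
move=> ev; have e2 := even_half ev.
rewrite H0E; split; last exact: Mt_size.
split; [apply: Mt_wf; lia|exact: Mt_uniq|apply: Mt_lab => k; rewrite /lH0; by case: ifP|].
move=> i iv; rewrite Mt_D.
case: ifP => [_|h]; last lia.
by rewrite /lH0; case: ifP.
Qed.

Lemma H1_good (v : nat) (eps : int) : ~~ odd v -> (4 <= v)%N ->
  goodE v (H1_edges v eps) (-1) /\ size (H1_edges v eps) = (v./2).+1.
Proof.
move=> ev v4; have e2 := even_half ev.
rewrite H1E; split; last by rewrite size_cat Mt_size /=; lia.
split.
- rewrite all_cat; apply/andP; split; last by apply: Mt_wf; lia.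
  rewrite /= /wf0 /=; apply/and4P; split => //; lia.
- rewrite map_cat cat_uniq Mt_key /=; apply/andP; split => //.
    apply/hasPn => p /mapP[k _ ->]; by rewrite /keyE /=.
  rewrite map_inj_uniq ?iota_uniq // => k1 k2 [h _]; lia.
- rewrite all_cat; apply/andP; split => //.
  by apply: Mt_lab => k; rewrite /lH1; case: ifP.
move=> i iv; rewrite Dsum_cat Mt_D.
case: (ltnP i 4) => i4.
  rewrite /= addr0 /Dsum !big_cons big_nil /=.
  by case: i i4 {iv} => [|[|[|[|i]]]].
have -> : (i < 4 + 2 * (v - 4)./2)%N by lia.
rewrite /= /Dsum !big_cons big_nil /=.
have -> : (0 == i) = false by apply/negbTE; lia.
have -> : (1 == i) = false by apply/negbTE; lia.
have -> : (2 == i) = false by apply/negbTE; lia.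
have -> : (3 == i) = false by apply/negbTE; lia.
by rewrite /lH1; case: ifP.
Qed.

Lemma H2_good (v : nat) (eps : int) : ~~ odd v -> (4 <= v)%N ->
  goodE v (H2_edges v eps) (-1) /\ size (H2_edges v eps) = (v./2).+1.
Proof.
move=> ev v4; have e2 := even_half ev.
rewrite H2E; split; last by rewrite size_cat Mt_size /=; lia.
split.
- rewrite all_cat; apply/andP; split; last by apply: Mt_wf; lia.
  rewrite /= /wf0 /=; apply/and4P; split => //; lia.
- rewrite map_cat cat_uniq Mt_key /=; apply/andP; split => //.
    apply/hasPn => p /mapP[k _ ->]; by rewrite /keyE /=.
  rewrite map_inj_uniq ?iota_uniq // => k1 k2 [h _]; lia.
- rewrite all_cat; apply/andP; split => //.
  by apply: Mt_lab => k; rewrite /lH2; case: ifP.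
move=> i iv; rewrite Dsum_cat Mt_D.
case: (ltnP i 4) => i4.
  rewrite /= addr0 /Dsum !big_cons big_nil /=.
  by case: i i4 {iv} => [|[|[|[|i]]]].
have -> : (i < 4 + 2 * (v - 4)./2)%N by lia.
rewrite /= /Dsum !big_cons big_nil /=.
have -> : (0 == i) = false by apply/negbTE; lia.
have -> : (1 == i) = false by apply/negbTE; lia.
have -> : (2 == i) = false by apply/negbTE; lia.
have -> : (3 == i) = false by apply/negbTE; lia.
by rewrite /lH2; case: ifP.
Qed.

Lemma subset_binom (R : realType) (V : finType) (A : {set V}) (y : R) :
  (y + 1) ^+ #|A| = \sum_(S : {set V} | S \subset A) y ^+ #|S|.
Proof.
rewrite exprD1n.
rewrite (partition_big (fun S : {set V} => inord #|S| : 'I_#|A|.+1) xpredT) //=.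
apply: eq_bigr => k _.
have -> : \sum_(S : {set V} | (S \subset A) && (inord #|S| == k)) y ^+ #|S|
   = \sum_(S : {set V} | (S \subset A) && (#|S| == k)) y ^+ k.
  apply: eq_big => S.
    case sA: (S \subset A) => //=.
    have le : (#|S| <= #|A|)%N by apply: subset_leq_card.
    apply/eqP/eqP => [eq|eq]; first by rewrite -eq inordK.
    by apply: val_inj; rewrite /= inordK ?eq.
  by move=> /andP[sA /eqP <-]; rewrite inordK // ltnS subset_leq_card.
rewrite sumr_const -cards_draws.
congr (_ *+ _); apply: eq_card => S; by rewrite inE.
Qed.

Lemma capcard_lt4 (V : finType) (b : nat) (F : 'I_b -> {set V}) (p : 'I_b * 'I_b) :
  is_TS F -> (#|F p.1 :&: F p.2| < 4)%N.
Proof.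
move=> [_ H3]; rewrite ltnS -(H3 p.1); apply: subset_leq_card; exact: subsetIl.
Qed.

Lemma Ppoly_pairs (R : realType) (V : finType) (b : nat) (F : 'I_b -> {set V}) (x : R) :
  is_TS F -> Ppoly F x = \sum_(p : 'I_b * 'I_b | p.1 != p.2) x ^+ #|F p.1 :&: F p.2|.
Proof.
move=> TS.
transitivity (\sum_(p : 'I_b * 'I_b | p.1 != p.2) \sum_(j < 4 | #|F p.1 :&: F p.2| == j) x ^+ j); last first.
  apply: eq_bigr => p _.
  by rewrite (big_pred1 (Ordinal (capcard_lt4 p TS))).
rewrite (exchange_big_dep xpredT) //=.
apply: eq_bigr => j _.
rewrite sumr_const /vj mulrC -mulr_natr mul1r cardsE.
by rewrite mulr_natr.
Qed.

Lemma pair_count (V : finType) (b : nat) (F : 'I_b -> {set V}) (S : {set V}) :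
  #|[set p : 'I_b * 'I_b | (p.1 != p.2) && (S \subset F p.1 :&: F p.2)]|
  = (lamS F S * lamS F S - lamS F S)%N.
Proof.
set A := [set i | S \subset F i].
have -> : [set p : 'I_b * 'I_b | (p.1 != p.2) && (S \subset F p.1 :&: F p.2)]
   = setX A A :\: [set (i, i) | i in A].
  apply/setP => -[i j]; rewrite !inE /= subsetI.
  case: (eqVneq i j) => [<-|ne] /=.
    rewrite andbb; case SFi: (S \subset F i); rewrite ?andbF //= andbT.
    by rewrite (imset_f (fun k => (k, k)) (_ : i \in A)) // inE.
  suff -> : (i, j) \notin [set (i0, i0) | i0 in A] by [].
  by apply/imsetP => -[k _ [e1 e2]]; move: ne; rewrite e1 e2 eqxx.
rewrite cardsD cardsX (setIidPr _).
  by rewrite card_imset // => i j [].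
apply/subsetP => p /imsetP[i iA ->]; by rewrite inE /= iA.
Qed.

Lemma Ppoly_sets (R : realType) (V : finType) (b : nat) (F : 'I_b -> {set V}) (x : R) :
  is_TS F -> Ppoly F x = \sum_(S : {set V})
     (x - 1) ^+ #|S| * (lamS F S * lamS F S - lamS F S)%N%:R.
Proof.
move=> TS; rewrite Ppoly_pairs //.
under eq_bigr => p _ do rewrite -{1}(subrK 1 x) subset_binom.
rewrite (exchange_big_dep xpredT) //=.
apply: eq_bigr => S _; rewrite sumr_const -pair_count mulr_natr.
congr (_ *+ _); rewrite cardsE; apply: eq_card => p.
by [].
Qed.

Lemma lin_sets (R : realType) (V : finType) (b : nat) (F : 'I_b -> {set V}) (x : R) :
  is_TS F -> \sum_(S : {set V}) (x - 1) ^+ #|S| * (lamS F S)%:R = b%:R * x ^+ 3.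
Proof.
move=> [_ H3].
transitivity (\sum_(S : {set V}) \sum_(i | S \subset F i) (x - 1) ^+ #|S|).
  apply: eq_bigr => S _; rewrite sumr_const mulr_natr /lamS cardsE.
  by congr (_ *+ _); apply: eq_card => i.
rewrite (exchange_big_dep xpredT) //=.
transitivity (\sum_(i < b) x ^+ 3); last by rewrite sumr_const card_ord mulr_natl.
apply: eq_bigr => i _.
by rewrite -(H3 i) -{2}(subrK 1 x) subset_binom.
Qed.

Lemma part_card (R : realType) (V : finType) (G : {set V} -> R) :
  \sum_(S : {set V}) G S = \sum_(k < #|V|.+1) \sum_(S : {set V} | #|S| == k) G S.
Proof.
rewrite (partition_big (fun S : {set V} => inord #|S| : 'I_#|V|.+1) xpredT) //=.
apply: eq_bigr => k _; apply: eq_bigl => S /=.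
have le : (#|S| <= #|V|)%N by apply: max_card.
apply/eqP/eqP => [eq|eq]; first by rewrite -eq inordK.
by apply: val_inj; rewrite /= inordK ?eq.
Qed.


Lemma Ppoly_Q (R : realType) (V : finType) (b : nat) (F : 'I_b -> {set V}) (x : R) :
  is_TS F -> Ppoly F x =
   \sum_(k < #|V|.+1) (x - 1) ^+ k * (Qk F k)%:R - b%:R * x ^+ 3.
Proof.
move=> TS; rewrite Ppoly_sets // -(lin_sets x TS).
transitivity (\sum_(S : {set V}) ((x - 1) ^+ #|S| * (lamS F S * lamS F S)%N%:R
    - (x - 1) ^+ #|S| * (lamS F S)%:R)).
  apply: eq_bigr => S _; rewrite natrB ?mulrBr //.
  by case: (lamS F S) => // n; rewrite leq_pmulr.
rewrite sumrB part_card; congr (_ - _).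
apply: eq_bigr => k _; rewrite /Qk natr_sum mulr_sumr.
by apply: eq_bigr => S /eqP <-.
Qed.

Lemma reduce (R : realType) (V : finType) (b : nat) (F F' : 'I_b -> {set V}) (x : R) :
  is_TS F -> is_TS F' -> (forall k, (Qk F k <= Qk F' k)%N) -> 1 <= x ->
  Ppoly F x <= Ppoly F' x.
Proof.
move=> TS TS' HQ x1; rewrite !Ppoly_Q // lerD2r.
apply: ler_sum => k _; apply: ler_wpM2l; first by rewrite exprn_ge0 // subr_ge0.
by rewrite ler_nat.
Qed.
Lemma D_window (V : finType) (b : nat) (F : 'I_b -> {set V}) (lam : nat)
   (E : seq (nat * nat * int)) (lo : int) :
  defect_iso F lam E -> goodE #|V| E lo ->
  forall x : V, lo <= \sum_(y | y != x) defect F lam x y <= lo + 2.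
Proof.
move=> [f [fbij iso]] [wf _ _ win] x.
have [g fK gK] := fbij.
rewrite -[x]gK; set i := g x.
suff -> : \sum_(y | y != f i) defect F lam (f i) y = Dsum E i by exact: win.
rewrite (reindex f (onW_bij _ fbij)) /=.
transitivity (\sum_(j : 'I_#|V| | j != i) label_of E i j); last by rewrite degsum.
apply: eq_big => [j|j ji]; first by rewrite (inj_eq (bij_inj fbij)).
by rewrite iso //; apply: contraNneq ji => ->.
Qed.

Lemma nF_count (V : finType) (b : nat) (F : 'I_b -> {set V}) (lam : nat)
   (E : seq (nat * nat * int)) (lo : int) :
  defect_iso F lam E -> goodE #|V| E lo ->
  (\sum_(x : V) \sum_(y | y != x) ((lamS F [set x; y] != lam) : nat) = 2 * size E)%N.
Proof.
move=> [f [fbij iso]] [wf uE lE _].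
rewrite -(edge_count wf uE lE).
rewrite (reindex f (onW_bij _ fbij)) /=; apply: eq_bigr => i _.
rewrite (reindex f (onW_bij _ fbij)) /=.
apply: eq_big => [j|j ji]; first by rewrite (inj_eq (bij_inj fbij)).
have ji' : i != j by rewrite eq_sym; apply: contraNneq ji => ->.
rewrite -(iso i j ji') /defect; congr (nat_of_bool _).
by rewrite subr_eq0 eqz_nat.
Qed.

Lemma dsqF (V : finType) (b : nat) (F : 'I_b -> {set V}) (lam : nat)
   (E : seq (nat * nat * int)) (lo : int) :
  defect_in_range F lam -> defect_iso F lam E -> goodE #|V| E lo ->
  dsq F lam = size E.
Proof.
move=> rng iso good.
have e : dsq F lam = (\sum_(S : {set V} | #|S| == 2) ((lamS F S != lam) : nat))%N.
  apply: eq_bigr => S /cards2P [x [y [xy ->]]].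
  have := rng x y xy; rewrite /defect /dn.
  case: (boolP (lamS F [set x; y] == lam)) => [/eqP -> _|ne]; first by rewrite subnn.
  move=> /or3P[] /eqP h; move: ne; lia.
have := nF_count iso good; rewrite (conv (fun S => ((lamS F S != lam) : nat))) -e; lia.
Qed.

Lemma rbal (V : finType) (b : nat) (F : 'I_b -> {set V}) (lam : nat)
   (E : seq (nat * nat * int)) (lo : int) :
  is_TS F -> defect_iso F lam E -> goodE #|V| E lo ->
  forall x y : V, (lamS F [set x] <= (lamS F [set y]).+1)%N.
Proof.
move=> TS iso good.
have key : forall x : V, \sum_(y | y != x) defect F lam x y
     = (2 * lamS F [set x])%N%:Z - (#|V|.-1 * lam)%N%:Z.
  move=> x; rewrite /defect sumrB.
  have sz : forall f : V -> nat,
     \sum_(y | y != x) (f y)%:Z = (\sum_(y | y != x) f y)%N%:Z.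
    by move=> f; rewrite -natz natr_sum; apply: eq_bigr => y _; rewrite natz.
  rewrite (sz (fun y => lamS F [set x; y])) (sz (fun _ => lam)) vertex //.
  have -> : (\sum_(y | y != x) lam = \sum_(y in predC1 x) lam)%N by [].
  by rewrite sum_nat_const cardC1.
move=> x y.
have := D_window iso good x; have := D_window iso good y.
rewrite !key => /andP[h1 h2] /andP[h3 h4].
lia.
Qed.
Lemma caseC1 (V : finType) (b : nat) (F F' : 'I_b -> {set V}) (lam : nat) (eps : int) :
  is_TS F -> is_TS F' -> assoc_pair #|V| b lam eps -> C1 #|V| b lam ->
  nearly2_C1 F lam eps ->
  (dsq F lam <= dsq F' lam)%N /\ exists E lo, defect_iso F lam E /\ goodE #|V| E lo.
Proof.
move=> TS TS' [ap [_ _]] [v3 [_ [v5 v2]]] [rng [E [GE iso]]].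
have v4 : (4 <= #|V|)%N by case: TS => h _; lia.
have [lo [good sz]] := G_good v4 GE.
split; last by exists E, lo.
rewrite (dsqF rng iso good).
have ev : forall x, ~~ odd (deg F' lam x).
  move=> x; rewrite deg_odd // oddM.
  have : ((#|V| - 1) %% 2 = 0)%N \/ (lam %% 2 = 0)%N by lia.
  by rewrite !modn2 => -[] /eqP; rewrite eqb0 => /negbTE ->; rewrite ?andbF.
have ho := ocnt_odd lam TS'.
set C := 'C(#|V|, 2) in ap ho.
set o := ocnt F' lam in ho.
have hod := o_le_dsq F' lam.
have hm : (o %% 2 = (3 * b + C * lam) %% 2)%N by rewrite !modn2 ho.
case: sz => [[he ->]|[he ->]].
  have o1 : (0 < o)%N by case: he => ? ; subst eps; lia.
  have := path3 ev o1; lia.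
have hne : (3 * b != C * lam)%N by apply/eqP; case: he => ?; subst eps; lia.
case: (posnP o) => [o0|o1].
  exact: (even_bound TS' o0 hne).
have := path3 ev o1; case: he => ?; subst eps; lia.
Qed.

Lemma caseC2 (V : finType) (b : nat) (F F' : 'I_b -> {set V}) (lam : nat) (eps : int) :
  is_TS F -> is_TS F' -> assoc_pair #|V| b lam eps -> C2 #|V| b lam ->
  nearly2_C2 F lam eps ->
  (dsq F lam <= dsq F' lam)%N /\ exists E lo, defect_iso F lam E /\ goodE #|V| E lo.
Proof.
move=> TS TS' [ap [_ _]] [ev [ol _]] [rng hc].
have v4 : (4 <= #|V|)%N.
  case: TS => h _; have : (#|V| %% 2 = 0)%N by rewrite modn2 (negbTE ev). lia.
have od : forall x, odd (deg F' lam x).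
  move=> x; rewrite deg_odd // oddM ol /=.
  have : ((#|V| - 1) %% 2 = 1)%N.
    have : (#|V| %% 2 = 0)%N by rewrite modn2 (negbTE ev). lia.
  by rewrite modn2 => /eqP; rewrite eqb1.
have cb := cover_bound od.
have ho := ocnt_odd lam TS'.
set C := 'C(#|V|, 2) in ap ho.
set o := ocnt F' lam in ho cb.
have hod := o_le_dsq F' lam.
have hm : (o %% 2 = (3 * b + C * lam) %% 2)%N by rewrite !modn2 ho.
have e2 := even_half ev.
move: hc; case: ifP => hpar.
  move=> iso; have [good sz] := H0_good eps ev.
  split; last by exists (H0_edges #|V| eps), (-1).
  rewrite (dsqF rng iso good) sz; lia.
have hn : (`|eps - (#|V|./2)%:Z| %% 2 = 1)%N by rewrite modn2 (negbFE hpar).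
have ob : (o != #|V|./2)%N.
  apply/eqP => oe; move: hm hn; rewrite oe; lia.
case=> [[_ iso]|[_ iso]].
  have [good sz] := H1_good eps ev v4.
  split; last by exists (H1_edges #|V| eps), (-1).
  rewrite (dsqF rng iso good) sz; lia.
have [good sz] := H2_good eps ev v4.
split; last by exists (H2_edges #|V| eps), (-1).
rewrite (dsqF rng iso good) sz; lia.
Qed.

Theorem theorem2p3 (R : realType) (V : finType) (b : nat)
  (F : 'I_b -> {set V}) :
  NWBTS F ->
  forall F' : 'I_b -> {set V}, is_TS F' ->
  forall x : R, 1 <= x -> Ppoly F x <= Ppoly F' x.
Proof.
move=> [TS [B3 [lam [eps [ap cs]]]]] F' TS' x x1.
have [hd [E [lo [iso good]]]] : (dsq F lam <= dsq F' lam)%N /\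
   exists E lo, defect_iso F lam E /\ goodE #|V| E lo.
  case: cs => [[c1 n1]|[c2 n2]]; [exact: (caseC1 TS TS' ap c1 n1) | exact: (caseC2 TS TS' ap c2 n2)].
apply: reduce => // k.
case: k => [|[|[|[|k]]]].
- by rewrite !K0.
- by apply: K1 => //; exact: rbal iso good.
- exact: K2red hd.
- exact: K3.
- by rewrite K4.
Qed.
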